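(* Let $X$ be a Tychonoff space and let $G(X)$ denote either $F(X)$ or $A(X)$. Then $G(X)$ has countable fan-tightness if and only if $X$ is discrete. *)

(* Defs.v *)
From Stdlib Require Import Reals List.
Open Scope R_scope.

Record TopSpace := {
  pt :> Type;
  is_open : (pt -> Prop) -> Prop;
  open_total : is_open (fun _ => True);
  open_inter : forall U V, is_open U -> is_open V -> is_open (fun x => U x /\ V x);
  open_union : forall F : (pt -> Prop) -> Prop,
      (forall U, F U -> is_open U) -> is_open (fun x => exists U, F U /\ U x)
}.
Arguments is_open {_} _.

Definition is_closed {X : TopSpace} (C : X -> Prop) : Prop :=
  is_open (fun x => ~ C x).

Definition in_closure {X : TopSpace} (S : X -> Prop) (x : X) : Prop :=
  forall U, is_open U -> U x -> exists y, U y /\ S y.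

Definition continuous {X Y : TopSpace} (f : X -> Y) : Prop :=
  forall V : Y -> Prop, is_open V -> is_open (fun x => V (f x)).

Definition continuous_R {X : TopSpace} (f : X -> R) : Prop :=
  forall (x : X) (eps : R), 0 < eps ->
    exists U, is_open U /\ U x /\ forall y, U y -> Rabs (f y - f x) < eps.

Definition discrete (X : TopSpace) : Prop := forall U : X -> Prop, is_open U.

Definition tychonoff (X : TopSpace) : Prop :=
  (forall x : X, is_closed (fun y => y = x)) /\
  (forall (C : X -> Prop) (x : X), is_closed C -> ~ C x ->
     exists f : X -> R, continuous_R f /\ f x = 0 /\
       (forall y, C y -> f y = 1) /\ (forall y, 0 <= f y <= 1)).

Definition countable_fan_tightness (X : TopSpace) : Prop :=
  forall (x : X) (A : nat -> X -> Prop),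
    (forall n, in_closure (A n) x) ->
    exists F : nat -> list X,
      (forall n y, In y (F n) -> A n y) /\
      in_closure (fun y => exists n, In y (F n)) x.

Record TopGroup := {
  tg_space :> TopSpace;
  mul : tg_space -> tg_space -> tg_space;
  inv : tg_space -> tg_space;
  one : tg_space;
  mulA : forall a b c, mul a (mul b c) = mul (mul a b) c;
  mul1g : forall a, mul one a = a;
  mulVg : forall a, mul (inv a) a = one;
  mul_cont : forall (x y : tg_space) (W : tg_space -> Prop),
      is_open W -> W (mul x y) ->
      exists U V, is_open U /\ is_open V /\ U x /\ V y /\
        forall a b, U a -> V b -> W (mul a b);
  inv_cont : continuous inv
}.
Arguments mul {_} _ _.
Arguments inv {_} _.
Arguments one {_}.

Definition abelian (G : TopGroup) : Prop := forall a b : G, mul a b = mul b a.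

Definition group_hom {G H : TopGroup} (phi : G -> H) : Prop :=
  forall a b : G, phi (mul a b) = mul (phi a) (phi b).

Definition is_free_topological_group (X : TopSpace) (G : TopGroup) (i : X -> G) : Prop :=
  continuous i /\
  forall (H : TopGroup) (f : X -> H), continuous f ->
    exists phi : G -> H,
      group_hom phi /\ continuous phi /\ (forall x, phi (i x) = f x) /\
      (forall psi : G -> H, group_hom psi -> continuous psi ->
         (forall x, psi (i x) = f x) -> forall g, psi g = phi g).

Definition is_free_abelian_topological_group (X : TopSpace) (G : TopGroup) (i : X -> G) : Prop :=
  abelian G /\ continuous i /\
  forall (H : TopGroup) (f : X -> H), abelian H -> continuous f ->
    exists phi : G -> H,
      group_hom phi /\ continuous phi /\ (forall x, phi (i x) = f x) /\
      (forall psi : G -> H, group_hom psi -> continuous psi ->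
         (forall x, psi (i x) = f x) -> forall g, psi g = phi g).

(* Main.v *)
Require Import Defs.
From Stdlib Require Import Reals List Lra Lia FunctionalExtensionality PropExtensionality IndefiniteDescription Classical.
Open Scope R_scope.

Lemma pred_ext {T} (P Q : T -> Prop) : (forall x, P x <-> Q x) -> P = Q.
Proof. intros H; apply functional_extensionality; intros x; apply propositional_extensionality; auto. Qed.

Lemma open_local (X : TopSpace) (S : X -> Prop) :
  (forall y, S y -> exists U, is_open U /\ U y /\ forall z, U z -> S z) -> is_open S.
Proof.
  intros H.
  assert (E : S = (fun x => exists U, (is_open U /\ forall z, U z -> S z) /\ U x)).
  { apply pred_ext; intros x; split.
    - intros Sx; destruct (H x Sx) as [U [HU [Ux HS]]]; exists U; auto.
    - intros [U [[_ HS] Ux]]; auto. }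
  rewrite E; apply open_union; intros U [HU _]; exact HU.
Qed.

Definition dspace (T : Type) : TopSpace.
Proof. refine {| pt := T; is_open := fun _ => True |}; auto. Defined.

Definition discretize (G : TopGroup) : TopGroup.
Proof.
  refine {| tg_space := dspace G; mul := @mul G; inv := @inv G; one := @one G |}.
  - exact (mulA G).
  - exact (mul1g G).
  - exact (mulVg G).
  - intros x y W _ HW. exists (fun a => a = x), (fun b => b = y).
    repeat split; auto. intros a b -> ->; auto.
  - intros V _; exact I.
Defined.

Definition Hball (g : nat -> R) (r : R) (h : nat -> R) : Prop :=
  exists d, d < r /\ forall k, Rabs (h k - g k) <= d.

Definition Hopen (U : (nat -> R) -> Prop) : Prop :=
  forall g, U g -> exists eps, 0 < eps /\ forall h, Hball g eps h -> U h.

Lemma Hball_open g r : Hopen (Hball g r).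
Proof.
  intros h [d [Hd Hk]]. exists (r - d); split; [lra|].
  intros h' [d' [Hd' Hk']]. exists (d' + d); split; [lra|].
  intros k. specialize (Hk k); specialize (Hk' k).
  replace (h' k - g k) with ((h' k - h k) + (h k - g k)) by ring.
  eapply Rle_trans; [apply Rabs_triang|lra].
Qed.

Lemma Hball_center g r : 0 < r -> Hball g r g.
Proof. intros; exists 0; split; auto; intros k; unfold Rminus; rewrite Rplus_opp_r, Rabs_R0; lra. Qed.

Definition Hspace : TopSpace.
Proof.
  refine {| pt := nat -> R; is_open := Hopen |}.
  - intros g _; exists 1; split; auto; lra.
  - intros U V HU HV g [Ug Vg].
    destruct (HU g Ug) as [e1 [He1 H1]]; destruct (HV g Vg) as [e2 [He2 H2]].
    exists (Rmin e1 e2); split; [apply Rmin_glb_lt; auto|].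
    intros h [d [Hd Hk]]; split; [apply H1|apply H2]; exists d; split; auto;
      eapply Rlt_le_trans; eauto; [apply Rmin_l|apply Rmin_r].
  - intros F HF g [U [FU Ug]]. destruct (HF U FU g Ug) as [e [He H]].
    exists e; split; auto. intros h Hh; exists U; auto.
Defined.

Definition HG : TopGroup.
Proof.
  refine {| tg_space := Hspace; mul := fun a b k => a k + b k;
            inv := fun a k => - a k; one := fun _ => 0 |}.
  - intros; apply functional_extensionality; intros; simpl; ring.
  - intros; apply functional_extensionality; intros; simpl; ring.
  - intros; apply functional_extensionality; intros; simpl; ring.
  - intros x y W HW Wxy. destruct (HW _ Wxy) as [e [He H]].
    exists (Hball x (e/2)), (Hball y (e/2)).
    split; [apply Hball_open|]. split; [apply Hball_open|].
    split; [apply Hball_center; lra|]. split; [apply Hball_center; lra|].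
    intros a b [d1 [Hd1 Ha]] [d2 [Hd2 Hb]]. apply H. exists (d1 + d2); split; [lra|].
    intros k. specialize (Ha k); specialize (Hb k).
    replace (a k + b k - (x k + y k)) with ((a k - x k) + (b k - y k)) by ring.
    eapply Rle_trans; [apply Rabs_triang|lra].
  - intros V HV g Vg. destruct (HV _ Vg) as [e [He H]]. exists e; split; auto.
    intros h [d [Hd Hk]]. apply H. exists d; split; auto. intros k.
    replace (- h k - - g k) with (-(h k - g k)) by ring. rewrite Rabs_Ropp; auto.
Defined.

Lemma HG_mul (a b : HG) k : (mul a b : nat -> R) k = a k + b k.
Proof. reflexivity. Qed.

Fixpoint gpow {G : TopGroup} (g : G) (n : nat) : G :=
  match n with O => one | S m => mul g (gpow g m) end.

Lemma gpow_cont1 (G : TopGroup) (n : nat) : forall (g0 : G) (W : G -> Prop),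
  is_open W -> W (gpow g0 n) ->
  exists U, is_open U /\ U g0 /\ forall g, U g -> W (gpow g n).
Proof.
  induction n as [|n IH]; intros g0 W HW Wg.
  - exists (fun _ => True); split; [apply open_total|]; split; auto.
  - simpl in Wg. destruct (mul_cont G _ _ W HW Wg) as [U1 [V [HU1 [HV [U1g [Vg Hm]]]]]].
    destruct (IH g0 V HV Vg) as [U2 [HU2 [U2g H2]]].
    exists (fun x => U1 x /\ U2 x); split; [apply open_inter; auto|]; split; auto.
    intros g [a b]; simpl; apply Hm; auto.
Qed.

Lemma gpow_cont (G : TopGroup) (c : G) (n : nat) (g0 : G) (W : G -> Prop) :
  is_open W -> W (gpow (mul c g0) n) ->
  exists U, is_open U /\ U g0 /\ forall g, U g -> W (gpow (mul c g) n).
Proof.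
  intros HW Wg. destruct (gpow_cont1 G n _ W HW Wg) as [U0 [HU0 [U0g H0]]].
  destruct (mul_cont G _ _ U0 HU0 U0g) as [U1 [V [HU1 [HV [U1c [Vg Hm]]]]]].
  exists V; repeat split; auto.
Qed.

Lemma gpow_one (G : TopGroup) n : gpow (@one G) n = one.
Proof. induction n; simpl; auto. rewrite IHn; apply mul1g. Qed.

Section Hom.
Variable G : TopGroup.
Variable phi : G -> HG.
Hypothesis Hh : group_hom phi.

Lemma hom_one k : phi one k = 0.
Proof.
  pose proof (f_equal (fun h : nat -> R => h k) (Hh one one)) as E.
  simpl in E. rewrite mul1g in E. lra.
Qed.

Lemma hom_inv a k : phi (inv a) k = - phi a k.
Proof.
  pose proof (f_equal (fun h : nat -> R => h k) (Hh (inv a) a)) as E.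
  simpl in E. rewrite mulVg, hom_one in E. lra.
Qed.

Lemma hom_pow g m k : phi (gpow g m) k = INR m * phi g k.
Proof.
  induction m.
  - simpl. rewrite hom_one; ring.
  - simpl gpow. pose proof (f_equal (fun h : nat -> R => h k) (Hh g (gpow g m))) as E.
    simpl in E. rewrite E, IHm, S_INR. ring.
Qed.
End Hom.

Lemma nondiscrete_point (X : TopSpace) : ~ discrete X ->
  exists x : X, forall V, is_open V -> V x -> exists y, V y /\ y <> x.
Proof.
  intros H. apply NNPP; intros Hn; apply H; intros U; apply open_local; intros y Uy.
  destruct (classic (exists V, is_open V /\ V y /\ forall z, V z -> z = y)) as [[V [HV [Vy HVz]]]|Hno].
  - exists V; repeat split; auto. intros z Vz; rewrite (HVz z Vz); auto.
  - exfalso; apply Hn; exists y; intros V HV Vy; apply NNPP; intro Hne; apply Hno.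
    exists V; repeat split; auto; intros z Vz; apply NNPP; intro; apply Hne; exists z; auto.
Qed.

Lemma list_closed (X : TopSpace) (hT1 : forall x : X, is_closed (fun y => y = x)) (ys : list X) :
  is_open (fun z => ~ In z ys).
Proof.
  induction ys as [|a ys IH].
  - replace (fun z : X => ~ In z nil) with (fun _ : X => True); [apply open_total|].
    apply pred_ext; simpl; tauto.
  - replace (fun z => ~ In z (a :: ys)) with (fun z => ~ z = a /\ ~ In z ys).
    + apply open_inter; auto. apply hT1.
    + apply pred_ext; intros z; simpl; split; [intros [H1 H2] [H|H]; auto|].
      intros H; split; intro; apply H; auto.
Qed.

Lemma witnesses {A B : Type} (P : A -> B -> Prop) (l : list A) :
  (forall g, In g l -> exists y, P g y) ->
  exists ys : list B, (forall g, In g l -> exists y, In y ys /\ P g y) /\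
    (forall y, In y ys -> exists g, In g l /\ P g y).
Proof.
  induction l as [|a l IH]; intros H.
  - exists nil; split; simpl; tauto.
  - destruct (H a (or_introl eq_refl)) as [ya Pa].
    destruct IH as [ys [H1 H2]]; [intros; apply H; simpl; auto|].
    exists (ya :: ys); split.
    + intros g [<-|Hg]; [exists ya; simpl; auto|]. destruct (H1 g Hg) as [y [Hy Py]]; exists y; simpl; auto.
    + intros y [<-|Hy]; [exists a; simpl; auto|]. destruct (H2 y Hy) as [g [Hg Pg]]; exists g; simpl; auto.
Qed.

Lemma div_bound a b c : 1 <= c -> 0 <= a <= 1 -> 0 <= b <= 1 ->
  Rabs (a/c - b/c) <= Rabs (a - b) /\ Rabs (a/c - b/c) <= / c.
Proof.
  intros Hc Ha Hb.
  replace (a/c - b/c) with ((a-b) * / c) by (field; lra).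
  rewrite Rabs_mult, (Rabs_pos_eq (/ c)) by (left; apply Rinv_0_lt_compat; lra).
  assert (Hi : 0 < / c) by (apply Rinv_0_lt_compat; lra).
  assert (Hic : / c * c = 1) by (field; lra).
  assert (Hi1 : / c <= 1) by nra.
  assert (Hab : Rabs (a - b) <= 1) by (apply Rabs_le; lra).
  pose proof (Rabs_pos (a - b)). split; nra.
Qed.

Lemma fin_nbhd (X : TopSpace) (f : nat -> X -> R) (hc : forall k, continuous_R (f k)) (y0 : X) e :
  0 < e -> forall N, exists U, is_open U /\ U y0 /\
    forall z, U z -> forall k, (k < N)%nat -> Rabs (f k z - f k y0) < e.
Proof.
  intros He N; induction N as [|N [U [HU [Uy HUz]]]].
  - exists (fun _ => True); split; [apply open_total|]; split; auto; intros; lia.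
  - destruct (hc N y0 e He) as [U' [HU' [U'y HU'z]]].
    exists (fun x => U x /\ U' x); split; [apply open_inter; auto|]; split; auto.
    intros z [Uz U'z] k Hk. destruct (Nat.eq_dec k N) as [->|Hne]; auto.
    apply HUz; auto; lia.
Qed.

Lemma phi_cont (X : TopSpace) (f : nat -> X -> R) (hc : forall k, continuous_R (f k))
  (hb : forall k z, 0 <= f k z <= 1) :
  @continuous X HG (fun y k => f k y / INR (S k)).
Proof.
  intros V HV; apply open_local; intros y0 Vy0.
  destruct (HV _ Vy0) as [eps [He Hsub]].
  destruct (INR_unbounded (2 / eps)) as [N HN].
  destruct (fin_nbhd X f hc y0 (eps/2) ltac:(lra) N) as [U [HU [Uy HUz]]].
  exists U; repeat split; auto. intros z Uz. apply Hsub. exists (eps/2); split; [lra|].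
  intros k. assert (Hk1 : 1 <= INR (S k)) by (rewrite S_INR; pose proof (pos_INR k); lra).
  destruct (div_bound (f k z) (f k y0) (INR (S k)) Hk1 (hb k z) (hb k y0)) as [B1 B2].
  destruct (Nat.lt_ge_cases k N) as [Hlt|Hge].
  - specialize (HUz z Uz k Hlt); lra.
  - eapply Rle_trans; [exact B2|].
    assert (HSN : INR (S N) <= INR (S k)) by (apply le_INR; lia).
    assert (HN2 : 2 / eps < INR (S N)) by (rewrite S_INR; lra).
    assert (0 < 2 / eps) by (unfold Rdiv; apply Rmult_lt_0_compat; [lra|apply Rinv_0_lt_compat; lra]).
    apply Rle_trans with (/ (2 / eps)); [|right; field; lra].
    apply Rinv_le_contravar; lra.
Qed.

Lemma main_equiv (X : TopSpace) (hX : tychonoff X) (Pr : TopGroup -> Prop)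
  (PHG : Pr HG) (Pd : forall H, Pr H -> Pr (discretize H))
  (G : TopGroup) (PG : Pr G) (i : X -> G) (ci : continuous i)
  (univ : forall (H : TopGroup) (f : X -> H), Pr H -> continuous f ->
    exists phi : G -> H,
      group_hom phi /\ continuous phi /\ (forall x, phi (i x) = f x) /\
      (forall psi : G -> H, group_hom psi -> continuous psi ->
         (forall x, psi (i x) = f x) -> forall g, psi g = phi g)) :
  countable_fan_tightness G <-> discrete X.
Proof.
  split.
  - intros cft. apply NNPP; intros nd.
    destruct (nondiscrete_point X nd) as [x Hx].
    set (pw := fun (n : nat) (y : X) => gpow (mul (inv (i x)) (i y)) (S n)).
    set (A := fun n (g : G) => exists y, y <> x /\ g = pw n y).
    assert (Hcl : forall n, in_closure (A n) one).
    { intros n W HW Wone.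
      rewrite <- (gpow_one G (S n)), <- (mulVg G (i x)) in Wone.
      destruct (gpow_cont G (inv (i x)) (S n) (i x) W HW Wone) as [U [HU [Ux HUg]]].
      destruct (Hx (fun z => U (i z)) (ci U HU) Ux) as [y [Uy Hyx]].
      exists (pw n y); split; [apply HUg; auto|]. exists y; auto. }
    destruct (cft one A Hcl) as [F [HFA HFcl]].
    assert (Hf : forall n, exists f : X -> R, continuous_R f /\ f x = 0 /\
        (forall z, 0 <= f z <= 1) /\
        forall g, In g (F n) -> exists y, y <> x /\ g = pw n y /\ f y = 1).
    { intros n.
      destruct (witnesses (fun g y => y <> x /\ g = pw n y) (F n)) as [ys [H1 H2]].
      { intros g Hg; exact (HFA n g Hg). }
      destruct hX as [hT1 hCR].
      destruct (hCR (fun z => In z ys) x (list_closed X hT1 ys)) as [f [fc [fx [f1 fb]]]].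
      { intros Hin; destruct (H2 x Hin) as [g [_ [Hne _]]]; auto. }
      exists f; repeat split; auto; try apply fb.
      intros g Hg; destruct (H1 g Hg) as [y [Hy [Hyx Hgy]]]; exists y; auto. }
    set (fam := fun n => proj1_sig (constructive_indefinite_description _ (Hf n))).
    assert (Hfam : forall n, continuous_R (fam n) /\ fam n x = 0 /\
        (forall z, 0 <= fam n z <= 1) /\
        forall g, In g (F n) -> exists y, y <> x /\ g = pw n y /\ fam n y = 1).
    { intros n; unfold fam; destruct (constructive_indefinite_description _ (Hf n)); auto. }
    destruct (univ HG (fun y k => fam k y / INR (S k)) PHG) as [phi [Hh [Hc [Hi _]]]].
    { apply phi_cont; intros; apply Hfam. }
    destruct (HFcl (fun g => Hball (fun _ => 0) 1 (phi g))) as [g0 [[d [Hd Hk]] [n Hn]]].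
    + apply Hc. apply Hball_open.
    + exists 0; split; [lra|]. intros k. rewrite (hom_one G phi Hh). rewrite Rminus_0_r, Rabs_R0; lra.
    + destruct (Hfam n) as [_ [fx [_ Hw]]]. destruct (Hw g0 Hn) as [y [_ [-> fy]]].
      specialize (Hk n). unfold pw in Hk.
      rewrite (hom_pow G phi Hh) in Hk.
      pose proof (f_equal (fun h : nat -> R => h n) (Hh (inv (i x)) (i y))) as E.
      simpl in E. rewrite E in Hk. rewrite (hom_inv G phi Hh) in Hk. rewrite !Hi in Hk.
      rewrite fx, fy in Hk.
      replace (INR (S n) * (- (0 / INR (S n)) + 1 / INR (S n)) - 0) with 1 in Hk.
      * rewrite Rabs_R1 in Hk; lra.
      * field. apply not_0_INR; lia.
  - intros Hd.
    assert (Gd : forall U : G -> Prop, is_open U).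
    { destruct (univ (discretize G) i (Pd G PG)) as [phi [Hh [Hc [Hi Hu]]]].
      { intros V _; apply Hd. }
      destruct (univ G i PG ci) as [phi0 [_ [_ [_ Hu0]]]].
      assert (E : forall g, phi g = g).
      { intros g. rewrite (Hu0 phi Hh), (Hu0 (fun g => g)); auto.
        - intros a b; reflexivity.
        - intros V HV; exact HV.
        - intros V HV; apply (Hc V I). }
      intros U. replace U with (fun g => U (phi g)); [apply (Hc U I)|].
      apply pred_ext; intros g; rewrite E; tauto. }
    intros x A HA. exists (fun _ => x :: nil). split.
    + intros n y [<-|[]].
      destruct (HA n (fun g => g = x) (Gd _) eq_refl) as [y [-> Hy]]; auto.
    + intros U _ Ux. exists x; split; auto. exists 0%nat; simpl; auto.
Qed.

Theorem theorem3p8 (X : TopSpace) (hX : tychonoff X) :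
  (forall (G : TopGroup) (i : X -> G), is_free_topological_group X G i ->
     (countable_fan_tightness G <-> discrete X)) /\
  (forall (G : TopGroup) (i : X -> G), is_free_abelian_topological_group X G i ->
     (countable_fan_tightness G <-> discrete X)).
Proof.
  split.
  - intros G i [ci Hu]. apply (main_equiv X hX (fun _ => True) I (fun _ _ => I) G I i ci).
    intros H f _ cf; exact (Hu H f cf).
  - intros G i [HA [ci Hu]].
    assert (P1 : abelian HG).
    { intros a b; apply functional_extensionality; intros k; simpl; ring. }
    assert (P2 : forall H, abelian H -> abelian (discretize H)).
    { intros H HH a b; exact (HH a b). }
    exact (main_equiv X hX abelian P1 P2 G HA i ci Hu).
Qed.
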